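(* Let $K\subset\mathbb{R}^n$ be compact and $f:K\to\mathbb{R}^m$ continuous. For any $\epsilon>0$ there exists $F:\mathbb{R}^n\to\mathbb{R}^m$ such that (1) $F$ is the feedforward function of a radial neural network with $N(f,K,\epsilon)$ hidden layers whose widths are all $\max(n,m)+1$, and (2) $|F(x)-f(x)|<\epsilon$ for all $x\in K$.
   Context: $N(f,K,\epsilon)$ is the minimal $N$ for which there exist $c_1,\dots,c_N\in K$, $r_1,\dots,r_N\in(0,1)$ with $K\subseteq\bigcup_iB_{r_i}(c_i)$ and $f(B_{r_i}(c_i)\cap K)\subseteq B_\epsilon(f(c_i))$ for all $i$, where $B_r(c)$ is the open ball. For $h:\mathbb{R}\to\mathbb{R}$ piecewise differentiable, the radial rescaling function $h^{(k)}:\mathbb{R}^k\to\mathbb{R}^k$ is $h^{(k)}(v)=h(|v|)v/|v|$ ($v\ne0$), $h^{(k)}(0)=0$. A radial neural network with widths $(n_0,\dots,n_L)$ has weights $W_i\in\mathbb{R}^{n_i\times n_{i-1}}$, biases $b_i\in\mathbb{R}^{n_i}$, radial rescaling functions $\rho_i$ on $\mathbb{R}^{n_i}$; hidden layers are $1,\dots,L-1$; feedforward function $F=F_L$, $F_0=\mathrm{id}$, $F_i(x)=\rho_i(W_iF_{i-1}(x)+b_i)$. *)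

(* Defs.v *)
From HB Require Import structures.
From mathcomp Require Import all_boot all_order all_algebra.
From mathcomp Require Import all_classical all_reals all_analysis.
Set Implicit Arguments. Unset Strict Implicit. Unset Printing Implicit Defensive.
Import Order.TTheory GRing.Theory Num.Theory.
Import numFieldNormedType.Exports.
Local Open Scope classical_set_scope.
Local Open Scope ring_scope.

Definition enorm (R : realType) (k : nat) (v : 'cV[R]_k) : R :=
  Num.sqrt (\sum_(i < k) (v i ord0) ^+ 2).

Definition eball (R : realType) (k : nat) (c : 'cV[R]_k) (r : R) : set 'cV[R]_k :=
  [set x | enorm (x - c) < r].

Definition admissible_cover (R : realType) (n m : nat)
  (f : 'cV[R]_n -> 'cV[R]_m) (K : set 'cV[R]_n) (eps : R) (N : nat) : Prop :=
  exists (c : 'I_N -> 'cV[R]_n) (r : 'I_N -> R),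
    (forall i, K (c i)) /\
    (forall i, 0 < r i < 1) /\
    (K `<=` \bigcup_(i in [set: 'I_N]) eball (c i) (r i)) /\
    (forall i, f @` (eball (c i) (r i) `&` K) `<=` eball (f (c i)) eps).

(* N(f,K,eps): the minimal N with an admissible cover (0 if none exists,
   which does not happen for compact K and continuous f). *)
Definition Ncover (R : realType) (n m : nat)
  (f : 'cV[R]_n -> 'cV[R]_m) (K : set 'cV[R]_n) (eps : R) : nat :=
  match pselect (exists N, `[< admissible_cover f K eps N >]) with
  | left h => ex_minn h
  | right _ => 0%N
  end.

Definition piecewise_differentiable (R : realType) (h : R -> R) : Prop :=
  exists s : seq R, forall x, x \notin s -> derivable h x 1.

Definition radial_rescaling (R : realType) (k : nat) (h : R -> R)
  (v : 'cV[R]_k) : 'cV[R]_k :=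
  if v == 0 then 0 else (h (enorm v) / enorm v) *: v.

(* Radial neural network from R^a to R^c: a list of layers
   (W_i, b_i, rho_i = h_i^(n_i)) with matching widths. *)
Inductive rnet (R : realType) : nat -> nat -> Type :=
| rnet_nil : forall k, rnet R k k
| rnet_cons : forall a b c (W : 'M[R]_(b, a)) (bias : 'cV[R]_b) (h : R -> R),
    piecewise_differentiable h -> rnet R b c -> rnet R a c.

Fixpoint feedforward (R : realType) a c (net : rnet R a c) : 'cV[R]_a -> 'cV[R]_c :=
  match net in rnet _ a c return 'cV[R]_a -> 'cV[R]_c with
  | rnet_nil _ => fun x => x
  | rnet_cons _ _ _ W bias h _ rest =>
      fun x => feedforward rest (radial_rescaling h (W *m x + bias))
  end.

Fixpoint depth (R : realType) a c (net : rnet R a c) : nat :=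
  match net with
  | rnet_nil _ => 0%N
  | rnet_cons _ _ _ _ _ _ _ rest => (depth rest).+1
  end.

Fixpoint widths (R : realType) a c (net : rnet R a c) : seq nat :=
  match net with
  | rnet_nil k => [:: k]
  | rnet_cons a _ _ _ _ _ _ rest => a :: widths rest
  end.

Definition hidden_widths (R : realType) a c (net : rnet R a c) : seq nat :=
  drop 1 (take (depth net) (widths net)).

(* Main.v *)
Require Import Defs.
From HB Require Import structures.
From mathcomp Require Import all_boot all_order all_algebra.
From mathcomp Require Import all_classical all_reals all_analysis.
From mathcomp Require Import lra.
Import Order.TTheory GRing.Theory Num.Theory.
Import numFieldNormedType.Exports.
Local Open Scope classical_set_scope.
Local Open Scope ring_scope.
Set Implicit Arguments. Unset Strict Implicit. Unset Printing Implicit Defensive.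


Definition sq (R : realType) k (v : 'cV[R]_k) : R := \sum_(i < k) (v i ord0) ^+ 2.

Lemma sq_ge0 (R : realType) k (v : 'cV[R]_k) : 0 <= sq v.
Proof. by apply: sumr_ge0 => i _; rewrite sqr_ge0. Qed.

Lemma sq_mx (R : realType) k (v : 'cV[R]_k) : sq v = (v^T *m v) ord0 ord0.
Proof. by rewrite /sq !mxE; apply: eq_bigr => i _; rewrite !mxE expr2. Qed.

Lemma enorm_sq (R : realType) k (v : 'cV[R]_k) : enorm v = Num.sqrt (sq v).
Proof. by []. Qed.

Lemma enorm_ge0 (R : realType) k (v : 'cV[R]_k) : 0 <= enorm v.
Proof. exact: sqrtr_ge0. Qed.

Lemma enorm_eq0 (R : realType) k (v : 'cV[R]_k) : enorm v = 0 -> v = 0.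
Proof.
move=> /eqP; rewrite enorm_sq sqrtr_eq0 => h.
have h0 : sq v = 0 by apply/eqP; rewrite eq_le h sq_ge0.
apply/matrixP => i j; rewrite (ord1 j) mxE.
have := @psumr_eq0P _ _ predT (fun i => v i ord0 ^+ 2) (fun i _ => sqr_ge0 _) h0 i isT.
by move/eqP; rewrite sqrf_eq0 => /eqP.
Qed.

Lemma enormB (R : realType) k (a b : 'cV[R]_k) : enorm (a - b) = enorm (b - a).
Proof.
rewrite !enorm_sq /sq; congr Num.sqrt; apply: eq_bigr => i _.
by rewrite !mxE -sqrrN opprB.
Qed.

Lemma entry_le (R : realType) k (v : 'cV[R]_k) i : `|v i ord0| <= enorm v.
Proof.
rewrite enorm_sq -sqrtr_sqr ler_sqrt ?sq_ge0 // /sq (bigD1 i) //= lerDl.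
by apply: sumr_ge0 => j _; rewrite sqr_ge0.
Qed.

Definition ee (R : realType) p : 'cV[R]_p.+1 := delta_mx ord_max ord0.

Lemma EtE (R : realType) d k : (k <= d)%N ->
  (pid_mx k : 'M[R]_(d, k))^T *m pid_mx k = 1%:M.
Proof. by move=> kd; rewrite tr_pid_mx mul_pid_mx minnn (minn_idPr kd) pid_mx_1. Qed.

Lemma Ete (R : realType) p k : (k <= p)%N ->
  (pid_mx k : 'M[R]_(p.+1, k))^T *m ee R p = 0.
Proof.
move=> kp; rewrite /ee -colE; apply/matrixP => a b.
rewrite !mxE; rewrite /pid_mx; rewrite ?mxE /=.
have -> : (p == a :> nat) = false.
  by apply/negbTE; rewrite neq_ltn (leq_trans (ltn_ord a) kp) orbT.
by [].
Qed.

Lemma ete (R : realType) p : (ee R p)^T *m ee R p = 1%:M.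
Proof.
rewrite /ee trmx_delta mul_delta_mx; apply/matrixP => a b.
by rewrite !ord1 !mxE.
Qed.

Lemma sq_emb (R : realType) p k (u : 'cV[R]_k) : (k <= p.+1)%N ->
  sq (pid_mx k *m u : 'cV[R]_p.+1) = sq u.
Proof.
by move=> kp; rewrite !sq_mx trmx_mul mulmxA -(mulmxA u^T) EtE // mulmx1.
Qed.

Lemma trD (R : realType) a b (A B : 'M[R]_(a, b)) : (A + B)^T = A^T + B^T.
Proof. by apply/matrixP => i j; rewrite !mxE. Qed.

Lemma trZ (R : realType) a b (t : R) (A : 'M[R]_(a, b)) : (t *: A)^T = t *: A^T.
Proof. by apply/matrixP => i j; rewrite !mxE. Qed.

Lemma sq_cloud (R : realType) p k (u : 'cV[R]_k) (t : R) : (k <= p)%N ->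
  sq (pid_mx k *m u + t *: ee R p) = sq u + t ^+ 2.
Proof.
move=> kp; rewrite !sq_mx trD trZ mulmxDl !mulmxDr.
rewrite trmx_mul -!mulmxA (mulmxA _ (pid_mx k)) EtE ?(leq_trans kp) // mul1mx.
rewrite -!scalemxAr -!scalemxAl Ete // mulmx0 scaler0 addr0 mulmxA.
have -> : (ee R p)^T *m pid_mx k = ((pid_mx k : 'M[R]_(p.+1, k))^T *m ee R p)^T.
  by rewrite trmx_mul trmxK.
rewrite Ete // trmx0 mul0mx scaler0 add0r scalerA ete.
rewrite [LHS]mxE; congr (_ + _); by rewrite !mxE /= mulr1n mulr1 expr2.
Qed.

Lemma radial_fix (R : realType) k (h : R -> R) (v : 'cV[R]_k) :
  h (enorm v) = enorm v -> radial_rescaling h v = v.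
Proof.
move=> hv; rewrite /radial_rescaling; case: eqP => [->//|v0].
have e0 : enorm v != 0 by apply/eqP => /enorm_eq0.
by rewrite hv divff // scale1r.
Qed.

Lemma radial_zero (R : realType) k (h : R -> R) (v : 'cV[R]_k) :
  h (enorm v) = 0 -> radial_rescaling h v = 0.
Proof. by move=> hv; rewrite /radial_rescaling hv mul0r scale0r; case: ifP. Qed.

Definition hcut (R : realType) (H T : R) (t : R) : R :=
  if (H <= t) && (t < T) then 0 else t.

Lemma pd_id (R : realType) : piecewise_differentiable (fun t : R => t).
Proof. by exists [::] => x _; exact: derivable_id. Qed.

Lemma pd_hcut (R : realType) (H T : R) : piecewise_differentiable (hcut H T).
Proof.
exists [:: H; T] => x; rewrite !inE negb_or => /andP[xH xT].
case: (ltgtP x H) => [xltH | Hltx | xeH]; last by rewrite xeH eqxx in xH.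
  apply: (near_eq_derivable (f := id)); last exact: derivable_id.
  have xin : x \in `]-oo, H[ by rewrite in_itv /=.
  apply: filterS (near_in_itvNyo xin) => y; rewrite in_itv /= => yH.
  by rewrite /hcut leNgt yH.
case: (ltgtP x T) => [xltT | Tltx | xeT]; last by rewrite xeT eqxx in xT.
  apply: (near_eq_derivable (f := cst 0)); last exact: derivable_cst.
  have xin : x \in `]H, T[ by rewrite in_itv /= Hltx xltT.
  apply: filterS (near_in_itvoo xin) => y; rewrite in_itv /= => /andP[Hy yT].
  by rewrite /hcut (ltW Hy) yT.
apply: (near_eq_derivable (f := id)); last exact: derivable_id.
have xin : x \in `]T, +oo[ by rewrite in_itv /= Tltx.
apply: filterS (near_in_itvoy xin) => y; rewrite in_itv /= andbT => Ty.
by rewrite /hcut ltNge (ltW Ty) andbF.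
Qed.


Section Construction.
Variables (R : realType) (n m : nat) (f : 'cV[R]_n -> 'cV[R]_m) (N' : nat).
Variables (c : 'I_N'.+1 -> 'cV[R]_n) (r : 'I_N'.+1 -> R) (H : R).
Hypothesis H0 : 0 < H.
Hypothesis r0 : forall i, 0 < r i.
Hypothesis Hbig : forall a b : 'I_N'.+1, enorm (f (c a) - f (c b)) < H.

Let p := maxn n m.
Let np : (n <= p)%N. Proof. exact: leq_maxl. Qed.
Let mp : (m <= p)%N. Proof. exact: leq_maxr. Qed.

Definition cn k := c (inord k).
Definition rn k := r (inord k).
Definition fc k := f (cn k).
Definition thr k := Num.sqrt (rn k ^+ 2 + H ^+ 2).

Inductive st := Cloud of 'cV[R]_n | Stored of nat.

Definition enc k s : 'cV[R]_p.+1 :=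
  match s with
  | Cloud x => pid_mx n *m (x - cn k) + H *: ee R p
  | Stored j => pid_mx m *m (fc j - fc k)
  end.

Definition inb k x : bool := enorm (x - cn k) < rn k.

Definition step k s :=
  match s with
  | Cloud x => if inb k x then Stored k else Cloud x
  | Stored j => Stored j
  end.

Lemma sqrt_sq (a : R) : 0 <= a -> Num.sqrt (a ^+ 2) = a.
Proof. by move=> a0; rewrite sqrtr_sqr ger0_norm. Qed.

Lemma radial_step k s :
  radial_rescaling (hcut H (thr k)) (enc k s) = enc k (step k s).
Proof.
case: s => [x|j] /=.
  have hn : enorm (pid_mx n *m (x - cn k) + H *: ee R p) =
            Num.sqrt (sq (x - cn k) + H ^+ 2) by rewrite enorm_sq sq_cloud.
  have Hle : H <= Num.sqrt (sq (x - cn k) + H ^+ 2).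
    by rewrite -{1}(sqrt_sq (ltW H0)) ler_sqrt ?addr_ge0 ?sq_ge0 ?sqr_ge0 // lerDr sq_ge0.
  have rk0 := r0 (inord k).
  have eqb : (Num.sqrt (sq (x - cn k) + H ^+ 2) < thr k) = inb k x.
    rewrite /thr ltr_sqrt; last by rewrite addr_gt0 // exprn_gt0.
    rewrite ltrD2r /inb enorm_sq /rn.
    by rewrite -{2}(sqrt_sq (ltW rk0)) ltr_sqrt // exprn_gt0.
  case: ifP => hin.
    rewrite /= subrr mulmx0; apply: radial_zero.
    by rewrite hn /hcut Hle /= eqb hin.
  by apply: radial_fix; rewrite hn /hcut Hle /= eqb hin.
apply: radial_fix; rewrite /hcut.
have -> : enorm (pid_mx m *m (fc j - fc k) : 'cV[R]_p.+1) = enorm (fc j - fc k).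
  by rewrite !enorm_sq sq_emb // ltnW // ltnS.
by rewrite leNgt Hbig.
Qed.


Lemma etE k (u : 'cV[R]_k) : (k <= p)%N -> (ee R p)^T *m (pid_mx k *m u) = 0.
Proof.
move=> kp; rewrite mulmxA.
have -> : (ee R p)^T *m pid_mx k = ((pid_mx k : 'M[R]_(p.+1, k))^T *m ee R p)^T.
  by rewrite trmx_mul trmxK.
by rewrite Ete // trmx0 mul0mx.
Qed.

Definition wk k : 'cV[R]_p.+1 :=
  pid_mx n *m (cn k - cn k.+1) - pid_mx m *m (fc k - fc k.+1).
Definition Wmid k : 'M[R]_p.+1 := 1%:M + H^-1 *: (wk k *m (ee R p)^T).
Definition bmid k : 'cV[R]_p.+1 := pid_mx m *m (fc k - fc k.+1).

Lemma trans_step k s : Wmid k *m enc k s + bmid k = enc k.+1 s.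
Proof.
rewrite /Wmid mulmxDl mul1mx -scalemxAl -mulmxA.
case: s => [x|j] /=.
  rewrite mulmxDr etE // add0r -scalemxAr ete.
  have -> : wk k *m (H *: 1%:M) = H *: wk k.
    by rewrite -scalemxAr mulmx1.
  rewrite scalerA mulVf ?gt_eqF // scale1r /wk /bmid addrA subrK.
  rewrite addrAC -mulmxDr; congr (_ *m _ + _).
  by rewrite addrA subrK.
rewrite etE // mulmx0 scaler0 addr0 /bmid -mulmxDr.
by rewrite addrA subrK.
Qed.

Definition Wf : 'M[R]_(m, p.+1) := (pid_mx m : 'M[R]_(p.+1, m))^T.
Definition bf : 'cV[R]_m := fc N'.

Definition hk k := hcut H (thr k).

Fixpoint mk (k cnt : nat) : rnet R p.+1 m :=
  match cnt with
  | 0 => rnet_cons Wf bf (pd_id R) (rnet_nil R m)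
  | cnt'.+1 => rnet_cons (Wmid k) (bmid k) (pd_hcut H (thr k.+1)) (mk k.+1 cnt')
  end.

Fixpoint run (k cnt : nat) (s : st) : st :=
  match cnt with
  | 0 => s
  | cnt'.+1 => run k.+1 cnt' (step k.+1 s)
  end.

Definition fin K s := Wf *m enc K s + bf.

Lemma ff_mk cnt : forall k s, feedforward (mk k cnt) (enc k s) = fin (k + cnt) (run k cnt s).
Proof.
elim: cnt => [|cnt IH] k s /=.
  by rewrite addn0 radial_fix.
by rewrite trans_step radial_step IH addSnnS.
Qed.

Definition W0 : 'M[R]_(p.+1, n) := pid_mx n.
Definition b0 : 'cV[R]_p.+1 := H *: ee R p - pid_mx n *m cn 0.

Definition net : rnet R n m := rnet_cons W0 b0 (pd_hcut H (thr 0)) (mk 0 N').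

Lemma ff_net x : feedforward net x = fin N' (run 0 N' (step 0 (Cloud x))).
Proof.
rewrite /=.
have -> : W0 *m x + b0 = enc 0 (Cloud x).
  by rewrite /W0 /b0 /= mulmxBr addrA addrAC.
by rewrite radial_step ff_mk.
Qed.

Lemma depth_mk cnt k : depth (mk k cnt) = cnt.+1.
Proof. by elim: cnt k => [|cnt IH] k //=; rewrite IH. Qed.

Lemma widths_mk cnt k : widths (mk k cnt) = nseq cnt.+1 p.+1 ++ [:: m].
Proof. by elim: cnt k => [|cnt IH] k //=; rewrite IH. Qed.

Lemma depth_net : depth net = N'.+2.
Proof. by rewrite /= depth_mk. Qed.

Lemma hidden_net : hidden_widths net = nseq N'.+1 p.+1.
Proof.
rewrite /hidden_widths depth_net /= widths_mk /=.
by rewrite -/(nseq N'.+1 p.+1) take_size_cat ?size_nseq // drop0.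
Qed.

Lemma fin_stored j : fin N' (Stored j) = fc j.
Proof.
rewrite /fin /= /Wf mulmxA EtE; last by rewrite ltnW // ltnS.
by rewrite mul1mx /bf subrK.
Qed.

Variable x : 'cV[R]_n.
Definition good (k : nat) (s : st) : Prop :=
  and (forall j, s = Stored j -> inb j x)
  (forall y, s = Cloud y -> and (y = x) (forall i, (i <= k)%N -> ~~ inb i x)).

Lemma good_step k s : good k s -> good k.+1 (step k.+1 s).
Proof.
case=> hS hC; case: s hS hC => [y|j] hS hC /=; last by split => // y' [].
have [-> hi] := hC y erefl.
case: ifP => hin.
  by split => [j [<-] //| y' //].
split => // y' [<-]; split => // i.
rewrite leq_eqVlt => /orP[/eqP -> //|]; first by rewrite hin.
by rewrite ltnS; exact: hi.
Qed.

Lemma good_run cnt : forall k s, good k s -> good (k + cnt) (run k cnt s).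
Proof.
elim: cnt => [|cnt IH] k s g /=; first by rewrite addn0.
by rewrite -addSnnS; apply: IH; exact: good_step.
Qed.

Lemma good0 : good 0 (step 0 (Cloud x)).
Proof.
rewrite /=; case: ifP => hin.
  by split => [j [<-] //| y' //].
split => // y' [<-]; split => // i.
by rewrite leqn0 => /eqP ->; rewrite hin.
Qed.

Lemma net_correct (i : 'I_N'.+1) : inb i x ->
  exists j, inb j x /\ feedforward net x = fc j.
Proof.
move=> hi; rewrite ff_net.
have [hS hC] := good_run N' good0.
case E : (run 0 N' (step 0 (Cloud x))) => [y|j].
  have [_ hi'] := hC y E.
  by have := hi' i; rewrite add0n -ltnS ltn_ord hi => /(_ isT).
by exists j; split; [exact: hS|exact: fin_stored].
Qed.

End Construction.


Lemma small_enorm (R : realType) k (v : 'cV[R]_k) (r : R) : 0 < r ->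
  (forall i, `|v i ord0| < r / (k.+1)%:R) -> enorm v < r.
Proof.
move=> r0 hv; set s := r / (k.+1)%:R.
have s0 : 0 < s by rewrite divr_gt0.
have rs : r = s * (k.+1)%:R by rewrite /s mulfVK.
have hsq : sq v <= k%:R * s ^+ 2.
  have -> : k%:R * s ^+ 2 = \sum_(i < k) s ^+ 2 by rewrite sumr_const card_ord mulr_natl.
  apply: ler_sum => i _; rewrite -real_normK ?num_real //.
  by rewrite lerXn2r ?nnegrE ?normr_ge0 ?ltW.
rewrite enorm_sq -(sqrt_sq (ltW r0)) ltr_sqrt ?exprn_gt0 //.
apply: (le_lt_trans hsq); rewrite rs.
have k0 : 0 <= k%:R :> R by [].
have -> : (k.+1)%:R = k%:R + 1 :> R by rewrite natr1.
nra.
Qed.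

Lemma local_cont (R : realType) n m (K : set 'cV[R]_n) (f : 'cV[R]_n -> 'cV[R]_m)
  (eps : R) (c : 'cV[R]_n) : {within K, continuous f} -> K c -> 0 < eps ->
  exists2 r : R, 0 < r < 1 &
    forall y, K y -> enorm (y - c) < r -> enorm (f y - f c) < eps.
Proof.
move=> cf Kc e0.
have hcv : f @ within K (nbhs c) --> f c by move/subspace_continuousP: cf; apply.
have nE : nbhs (f c) [set z | enorm (z - f c) < eps].
  apply/nbhs_ballP; exists (eps / (m.+1)%:R); first by rewrite /= divr_gt0.
  move=> z [_ hz] /=; apply: small_enorm => // i.
  by rewrite !mxE distrC; exact: hz.
have := hcv _ nE; rewrite nbhs_simpl /= => /nbhs_ballP[d /= d0 hd].
exists (Num.min d (1/2)).
  have [h1 h2] : (0:R) < 1/2 /\ (1/2 : R) < 1 by split; lra.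
  by rewrite lt_min d0 h1 /= gt_min h2 orbT.
move=> y Ky hy; apply: (hd y) => //.
split => // i j; rewrite (ord1 j) /ball /= distrC.
have := entry_le (y - c) i; rewrite !mxE => h.
apply: le_lt_trans h _; apply: lt_le_trans hy _; by rewrite ge_min lexx.
Qed.

Lemma cover_exists (R : realType) n m (K : set 'cV[R]_n) (f : 'cV[R]_n -> 'cV[R]_m)
  (eps : R) : compact K -> {within K, continuous f} -> 0 < eps ->
  exists N, admissible_cover f K eps N.
Proof.
move=> cK cf e0.
have hr : forall c, exists r : R, K c -> (0 < r < 1) /\
    (forall y, K y -> enorm (y - c) < r -> enorm (f y - f c) < eps).
  move=> c; case: (pselect (K c)) => Kc; last by exists 1.
  by have [r r01 hr] := local_cont cf Kc e0; exists r.
have [rf hrf] := choice hr.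
pose rho c := rf c / (n.+1)%:R.
have rho0 : forall c, K c -> 0 < rho c.
  by move=> c Kc; case: (hrf c Kc) => /andP[r0 _] _; rewrite divr_gt0.
have Osub : forall c, K c -> ball c (rho c) `<=` eball c (rf c).
  move=> c Kc y [_ hy]; rewrite /eball /=; apply: small_enorm => [|i].
    by case: (hrf c Kc) => /andP[].
  by rewrite !mxE distrC; exact: (hy i ord0).
have [D' D'K KD'] : finite_subset_cover K (fun c => ball c (rho c)) K.
  rewrite compact_cover in cK; apply: cK.
    by move=> c _; exact: ball_open.
  by move=> c Kc; exists c => //; apply: ballxx; exact: rho0.
pose s : seq 'cV[R]_n := finmap.enum_fset D'.
have sK : forall i : 'I_(size s), K (nth 0 s i).
  move=> i; have : nth 0 s i \in s by exact: mem_nth.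
  by move/D'K; rewrite inE.
exists (size s), (fun i => nth 0 s i), (fun i => rf (nth 0 s i)).
split; first exact: sK.
split; [|split].
- by move=> i; case: (hrf _ (sK i)).
- move=> x Kx; have [c /= cD' hc] := KD' x Kx.
  have ci : (index c s < size s)%N by rewrite index_mem.
  exists (Ordinal ci) => //=.
  have Kc : K c by move: (D'K c cD'); rewrite inE.
  by rewrite nth_index //; exact: Osub.
- move=> i z [y [hy Ky] <-]; rewrite /eball /=.
  by case: (hrf _ (sK i)) => _; apply.
Qed.

Lemma sum2_ge (R : realType) N (F : 'I_N -> 'I_N -> R) :
  (forall a b, 0 <= F a b) -> forall a b, F a b <= \sum_a' \sum_b' F a' b'.
Proof.
move=> F0 a b; rewrite (bigD1 a) //= (bigD1 b) //= -addrA lerDl.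
by rewrite addr_ge0 // sumr_ge0 // => i _; rewrite ?sumr_ge0.
Qed.

Theorem theorem5 (R : realType) (n m : nat) (K : set 'cV[R]_n)
  (f : 'cV[R]_n -> 'cV[R]_m) :
  compact K -> {within K, continuous f} ->
  forall eps : R, 0 < eps ->
  exists net : rnet R n m,
    [/\ depth net = (Ncover f K eps).+1,
        hidden_widths net = nseq (Ncover f K eps) (maxn n m).+1 &
        forall x, K x -> enorm (feedforward net x - f x) < eps].
Proof.
move=> cK cf eps e0.
have [N0 hN0] := cover_exists cK cf e0.
rewrite /Ncover; case: pselect => [h|h]; last first.
  by exfalso; apply: h; exists N0; apply/asboolP.
case: ex_minnP => N /asboolP [c [r [cK' [r01 [Kcov hcov]]]]] _.
case: N c r cK' r01 Kcov hcov => [|N'] c r cK' r01 Kcov hcov.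
  exists (rnet_cons (0 : 'M[R]_(m, n)) 0 (pd_id R) (rnet_nil R m)); split => // x Kx.
  by have [[i ?] _ _] := Kcov x Kx.
pose H := 1 + \sum_a \sum_b enorm (f (c a) - f (c b)).
have Hbig : forall a b, enorm (f (c a) - f (c b)) < H.
  move=> a b; rewrite /H ltr_pwDl //.
  by apply: (sum2_ge (F := fun a b => enorm (f (c a) - f (c b)))) => ? ?; exact: enorm_ge0.
have H0 : 0 < H by apply: le_lt_trans (Hbig ord0 ord0); exact: enorm_ge0.
have r0 : forall i, 0 < r i by move=> i; case/andP: (r01 i).
exists (net f c r H); split; [exact: depth_net|exact: hidden_net|].
move=> x Kx; have [i _ hi] := Kcov x Kx.
have inbi : inb c r i x by rewrite /inb /cn /rn inord_val.
have [j [hj ->]] := net_correct H0 r0 Hbig inbi.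
rewrite enormB.
have := hcov (inord j) (f x); apply; exists x => //; split => //.
Qed.
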